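(* Fix a CW structure on $\mathbb{R}$ and an open subspace $P\subset\mathbb{R}^n\times\mathbb{R}$, regarded as a space over $\mathbb{R}$ via the projection $\tau_P$ onto the last coordinate. Then the natural function $$\Gamma_P(\mathbb{R})\longrightarrow\lim_c\pi_0\Gamma_P(c),$$ where $c$ ranges over the closed cells of $\mathbb{R}$ (ordered by reverse inclusion, with restriction maps), is surjective.
   Context: For a subset $A\subset\mathbb{R}$, $\Gamma_P(A)$ is the space (compact-open topology) of sections of $\tau_P$ over $A$, i.e. continuous maps $s\colon A\to P$ with $\tau_P\circ s=\mathrm{id}_A$; $\pi_0$ denotes the set of path components. The map sends a global section to the family of path components of its restrictions to the closed cells. *)

(* Defs.v *)
From HB Require Import structures.
From mathcomp Require Import all_boot all_order all_algebra.
From mathcomp Require Import all_classical all_reals all_analysis.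
Set Implicit Arguments. Unset Strict Implicit. Unset Printing Implicit Defensive.
Import Order.TTheory GRing.Theory Num.Theory.
Import numFieldNormedType.Exports.
Local Open Scope classical_set_scope.
Local Open Scope ring_scope.

(* A CW structure on R is determined by its set V of 0-cells: a closed
   discrete (= locally finite) subset of R, unbounded in both directions
   (so that the 1-cells, the open intervals between consecutive vertices,
   are bounded and cover the complement of V). *)
Definition CW_structure_R {R : realType} (V : set R) : Prop :=
  [/\ (forall a b : R, finite_set (V `&` `[a, b]%classic)),
      (forall x : R, exists2 v, V v & x < v) &
      (forall x : R, exists2 v, V v & v < x)].

Definition closed_cell {R : realType} (V : set R) (c : set R) : Prop :=
  (exists2 v, V v & c = [set v]) \/
  (exists v w, [/\ V v, V w, v < w,
     (forall x, V x -> ~ (v < x < w)) & c = `[v, w]%classic]).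

Definition maps_sp {R : realType} (n : nat) (A : set R) (P : set ('rV[R]_n * R)) :=
  {compact-open, set_type A -> set_type P}.

Definition Gamma {R : realType} (n : nat) (P : set ('rV[R]_n * R)) (A : set R)
  : set (maps_sp A P) :=
  [set s | continuous (s : set_type A -> set_type P) /\
           forall t : set_type A, (set_val (s t)).2 = set_val t].

Definition same_path_component {R : realType} {X : topologicalType} (G : set X)
  (f g : X) : Prop :=
  exists gam : R -> X,
    [/\ {within `[0, 1]%classic, continuous gam},
        (forall u, `[0, 1]%classic u -> G (gam u)),
        gam 0 = f & gam 1 = g].

Definition incl {T : Type} (A B : set T) (h : A `<=` B) : set_type A -> set_type B :=
  fun x => exist _ (set_val x) (mem_set (h _ (set_mem (valP x)))).

Definition restr {R : realType} (n : nat) (P : set ('rV[R]_n * R)) (A' A : set R)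
  (h : A' `<=` A) (s : maps_sp A P) : maps_sp A' P :=
  fun x => s (incl h x).

Arguments Gamma {R n} P A _.
Arguments same_path_component {R X} G f g.

(* Main.v *)
Require Import Defs.
From HB Require Import structures.
From mathcomp Require Import all_boot all_order all_algebra.
From mathcomp Require Import all_classical all_reals all_analysis.
Import Order.TTheory GRing.Theory Num.Theory.
Import numFieldNormedType.Exports.
Local Open Scope classical_set_scope.
Local Open Scope ring_scope.
From mathcomp Require Import lra.

Section Toolkit.
Context {R : realType}.

Lemma c_comp {T U W : topologicalType} (f : T -> U) (g : U -> W) :
  continuous f -> continuous g -> continuous (fun x => g (f x)).
Proof. by move=> cf cg x; apply: continuous_comp; [exact: cf|exact: cg]. Qed.

Lemma c_pair {T U W : topologicalType} (f : T -> U) (g : T -> W) :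
  continuous f -> continuous g -> continuous (fun x => (f x, g x)).
Proof. by move=> cf cg x; apply: cvg_pair; [exact: cf|exact: cg]. Qed.

Lemma c_fst {U W : topologicalType} : continuous (@fst U W).
Proof. by move=> [x y]; exact: cvg_fst. Qed.

Lemma c_snd {U W : topologicalType} : continuous (@snd U W).
Proof. by move=> [x y]; exact: cvg_snd. Qed.

Lemma c_cst {T U : topologicalType} (c : U) : continuous (fun _ : T => c).
Proof. by move=> x; exact: cvg_cst. Qed.

Lemma c_id {T : topologicalType} : continuous (fun x : T => x).
Proof. by move=> x; exact: cvg_id. Qed.

Lemma c_add {T : topologicalType} {V : normedModType R} (f g : T -> V) :
  continuous f -> continuous g -> continuous (fun x => f x + g x).
Proof. move=> cf cg x. first [exact: (continuousD (cf x) (cg x)) | exact: (cvgD (cf x) (cg x)) | apply: (cvgD (cf x) (cg x)) ]. Qed.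

Lemma c_sub {T : topologicalType} {V : normedModType R} (f g : T -> V) :
  continuous f -> continuous g -> continuous (fun x => f x - g x).
Proof. move=> cf cg x. first [exact: (continuousB (cf x) (cg x)) | exact: (cvgB (cf x) (cg x)) ]. Qed.

Lemma c_mul {T : topologicalType} (f g : T -> R) :
  continuous f -> continuous g -> continuous (fun x => f x * g x).
Proof. by move=> cf cg x; first [exact: (continuousM (cf x) (cg x)) | exact: (cvgM (cf x) (cg x))]. Qed.

Lemma c_max {T : topologicalType} (f g : T -> R) :
  continuous f -> continuous g -> continuous (fun x => Num.max (f x) (g x)).
Proof. by move=> cf cg x; exact: (continuous_max (cf x) (cg x)). Qed.

Lemma c_min {T : topologicalType} (f g : T -> R) :
  continuous f -> continuous g -> continuous (fun x => Num.min (f x) (g x)).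
Proof. by move=> cf cg x; exact: (continuous_min (cf x) (cg x)). Qed.

Lemma c_val {T : topologicalType} (A : set T) : continuous (fun x : set_type A => set_val x).
Proof. exact: initial_continuous. Qed.

Lemma c_into {T U : topologicalType} (A : set U) (f : T -> U) (hf : forall x, A (f x)) :
  continuous f -> continuous (fun x => (exist _ (f x) (mem_set (hf x)) : set_type A)).
Proof. by move=> cf; apply: continuous_comp_initial. Qed.

End Toolkit.
Section S.
Context {R : realType} (n : nat) (P : set ('rV[R]_n * R)).

Lemma tube (Phi : R -> 'rV[R]_n * R) (a b : R) :
  continuous Phi -> open P -> (forall y, a <= y <= b -> P (Phi y)) ->
  exists2 e : R, 0 < e & forall y t, a <= y <= b -> `|t| < e ->
     P ((Phi y).1, (Phi y).2 + t).
Proof.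
move=> cPhi oP hP.
pose f := fun z : R * R => ((Phi z.2).1, (Phi z.2).2 + z.1).
have cf : continuous f.
  apply: c_pair.
    apply: (c_comp _ fst); last exact: c_fst.
    apply: c_comp; [exact: c_snd | exact: cPhi].
  apply: c_add; last exact: c_fst.
  apply: (c_comp _ snd); last exact: c_snd.
  apply: c_comp; [exact: c_snd | exact: cPhi].
have Ot : open ([set g | [set g x | x in `[a, b]] `<=` P] : set {compact-open, R -> ('rV[R]_n * R)%type}).
  by apply: compact_open_open => //; exact: segment_compact.
have h0 : (curry f 0) @` `[a, b] `<=` P.
  move=> _ [y /= hy <-]; rewrite /curry /f /= addr0 -surjective_pairing.
  apply: hP; move: hy; rewrite in_itv /=; done.
have := @continuous_curry_fun _ _ _ f cf 0 _ (open_nbhs_nbhs (conj Ot h0)).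
move=> /nbhs_ballP [e e0 he]; exists e => // y t hy ht.
have : ball (0:R) e t by rewrite /ball /= sub0r normrN.
move=> /he /= hP'; apply: hP'; exists y => //; rewrite in_itv /=; done.
Qed.

End S.
Section Arith.
Context {R : realType}.
Definition cl (v w y : R) := Order.min (Order.max y v) w.

Ltac fin := repeat match goal with H : is_true (_ && _) |- _ => case/andP: H => ? ? end;
  first [ (apply/andP; split; lra) | (apply/eqP; rewrite eq_le; apply/andP; split; lra) | lra ].

Lemma clP (v w y : R) : v <= w ->
  [/\ v <= cl v w y <= w, (v <= y <= w -> cl v w y = y),
      (y <= v -> cl v w y = v) & (w <= y -> cl v w y = w)].
Proof.
move=> vw; rewrite /cl.
case: (lerP y v) => yv; [rewrite ?(min_l vw) | case: (lerP y w) => yw].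
all: split => [|h|h|h]; fin.
Qed.

Definition psi (v w eta x : R) :=
  Order.max 0 (1 - (w - x) / eta) - Order.max 0 (1 - (x - v) / eta).

Lemma maxP0 (z : R) : (z <= 0 -> Order.max 0 z = 0) /\ (0 <= z -> Order.max 0 z = z).
Proof. by split => h; [exact: max_l | exact: max_r]. Qed.

Lemma psi_facts (v w eta x : R) : 0 < eta -> 2 * eta <= w - v -> v <= x <= w ->
  (eta <= w - x -> exists2 q, 0 <= q <= 1 & psi v w eta x = - q /\ (0 < q -> x - v < eta))
  /\ (eta <= x - v -> exists2 q, 0 <= q <= 1 & psi v w eta x = q /\ (0 < q -> w - x < eta)).
Proof.
move=> e0 hvw /andP[vx xw].
have key : forall d, 0 <= d -> exists2 q, 0 <= q <= 1 &
    Order.max 0 (1 - d / eta) = q /\ (0 < q -> d < eta).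
  move=> d d0; case: (lerP eta d) => hd.
    exists 0; first by rewrite lexx ler01.
    split => //; last by rewrite ltxx.
    apply: max_l; rewrite subr_le0 ler_pdivlMr // mul1r //.
  exists (1 - d / eta); last first.
    split => //; apply: max_r; rewrite subr_ge0 ler_pdivrMr // mul1r; exact: ltW.
  have : 0 <= d / eta by apply: divr_ge0 => //; exact: ltW.
  have : d / eta <= 1 by rewrite ler_pdivrMr // mul1r; exact: ltW.
  move=> h1 h2; apply/andP; split; lra.
split => h.
  have [q hq [eq1 hq1]] := key (x - v) ltac:(lra).
  have : Order.max 0 (1 - (w - x) / eta) = 0.
    apply: max_l; rewrite subr_le0 ler_pdivlMr // mul1r //.
  move=> eq2; exists q => //; split; last exact: hq1.
  by rewrite /psi eq1 eq2 sub0r.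
have [q hq [eq1 hq1]] := key (w - x) ltac:(lra).
have : Order.max 0 (1 - (x - v) / eta) = 0.
  apply: max_l; rewrite subr_le0 ler_pdivlMr // mul1r //.
move=> eq2; exists q => //; split; last exact: hq1.
by rewrite /psi eq1 eq2 subr0.
Qed.

Lemma kappa_bounds (v w eta x l : R) : v < w -> 0 < eta -> 2 * eta <= w - v ->
  v <= x <= w -> 0 <= l <= 1 ->
  v - 1 <= x + l * psi v w eta x <= w + 1 /\
  x - eta <= cl v w (x + l * psi v w eta x) <= x + eta.
Proof.
move=> vw e0 hvw hx /andP[l0 l1].
have [H1 H2] := psi_facts _ _ _ _ e0 hvw hx.
have [vx xw] := andP hx.
have vw' : v <= w by exact: ltW.
have [hw | hw] := lerP eta (w - x).
- have [q /andP[q0 q1] [-> hq]] := H1 hw.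
  have lq0 : 0 <= l * q by exact: mulr_ge0.
  have lq1 : l * q <= q by rewrite -[leRHS]mul1r ler_wpM2r.
  set y := x + l * - q.
  have ey : y = x - l * q by rewrite /y mulrN.
  have [c1 c3 c4 c5] := clP v w y vw'; have /andP[c1' c2'] := c1.
  split; first (apply/andP; split; lra).
  case: (lerP y v) => yv.
    rewrite (c4 yv).
    have [q00|q00] := eqVneq q 0.
      by move: yv; rewrite ey q00 mulr0 subr0 => yv; apply/andP; split; lra.
    have : 0 < q by rewrite lt_def q00 q0.
    move=> /hq ?; apply/andP; split; lra.
  rewrite c3; first (apply/andP; split; lra).
  apply/andP; split; lra.
- have hv : eta <= x - v by lra.
  have [q /andP[q0 q1] [-> hq]] := H2 hv.
  have lq0 : 0 <= l * q by exact: mulr_ge0.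
  have lq1 : l * q <= q by rewrite -[leRHS]mul1r ler_wpM2r.
  set y := x + l * q.
  have ey : y = x + l * q by [].
  have [c1 c3 c4 c5] := clP v w y vw'; have /andP[c1' c2'] := c1.
  split; first (apply/andP; split; lra).
  case: (lerP w y) => yw.
    rewrite (c5 yw).
    have [q00|q00] := eqVneq q 0.
      by move: yw; rewrite /y q00 mulr0 addr0 => yw; apply/andP; split; lra.
    have : 0 < q by rewrite lt_def q00 q0.
    move=> /hq ?; apply/andP; split; lra.
  rewrite c3; first (apply/andP; split; lra).
  apply/andP; split; lra.
Qed.

Lemma psi_v (v w eta : R) : 0 < eta -> 2 * eta <= w - v -> psi v w eta v = -1.
Proof.
move=> e0 h; rewrite /psi subrr mul0r subr0 (max_r ler01).
rewrite max_l ?sub0r // subr_le0 ler_pdivlMr // mul1r; lra.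
Qed.

Lemma psi_w (v w eta : R) : 0 < eta -> 2 * eta <= w - v -> psi v w eta w = 1.
Proof.
move=> e0 h; rewrite /psi subrr mul0r subr0 (max_r ler01).
rewrite [X in _ - X]max_l ?subr0 // subr_le0 ler_pdivlMr // mul1r; lra.
Qed.
End Arith.

Section Edge.
Context {R : realType} (n : nat) (P : set ('rV[R]_n * R)).

Lemma c_cl (v w : R) : continuous (cl v w).
Proof. rewrite /cl; apply: c_min; [apply: c_max; [exact: c_id|exact: c_cst]|exact: c_cst]. Qed.

Lemma c_psi (v w eta : R) : continuous (psi v w eta).
Proof.
rewrite /psi; apply: c_sub; apply: c_max; try exact: c_cst;
  (apply: c_sub; first exact: c_cst); apply: c_mul; try exact: c_cst;
  apply: c_sub; (exact: c_id || exact: c_cst).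
Qed.

Lemma zs1 (V : zmodType) (a b e : V) : (a - b + b + e) - e = a.
Proof. by rewrite addrK subrK. Qed.
Lemma zs2 (V : zmodType) (b c e : V) : (b - b + c + e) - e = c.
Proof. by rewrite addrK subrr add0r. Qed.
Lemma zs3 (V : zmodType) (b e d : V) : (b - b + e + d) - e = d.
Proof. by rewrite subrr add0r (addrC e) addrK. Qed.

Lemma edge_homotopy (v w : R) (E A B : R -> 'rV[R]_n) :
  open P -> v < w -> continuous E -> continuous A -> continuous B ->
  (forall x, v <= x <= w -> P (E x, x)) ->
  (forall u, 0 <= u <= 1 -> P (A u, v)) ->
  (forall u, 0 <= u <= 1 -> P (B u, w)) ->
  A 0 = E v -> B 0 = E w ->
  exists H : R -> R -> 'rV[R]_n, [/\ continuous (fun z : R * R => H z.1 z.2),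
    (forall l x, v <= x <= w -> P (H l x, x)),
    (forall x, v <= x <= w -> H 0 x = E x),
    H 1 v = A 1 & H 1 w = B 1].
Proof.
move=> oP vw cE cA cB hE hA hB A0 B0.
have vw' : v <= w by exact: ltW.
have c01P := fun u : R => @clP R 0 1 u ler01.
pose Psi y := A (cl 0 1 (v - y)) - E v + E (cl v w y) + B (cl 0 1 (y - w)) - E w.
have cPsi : continuous Psi.
  rewrite /Psi; apply: c_sub; last exact: c_cst.
  apply: c_add; last first.
    apply: c_comp; last exact: cB.
    apply: c_comp; last exact: c_cl.
    by apply: c_sub; [exact: c_id|exact: c_cst].
  apply: c_add; last by apply: c_comp; [exact: c_cl|exact: cE].
  apply: c_sub; last exact: c_cst.
  apply: c_comp; last exact: cA.
  apply: c_comp; last exact: c_cl.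
  by apply: c_sub; [exact: c_cst|exact: c_id].
pose Phi y := (Psi y, cl v w y).
have cPhi : continuous Phi by apply: c_pair; [exact: cPsi|exact: c_cl].
have PsiE : forall y, v <= y <= w -> Psi y = E y.
  move=> y hy; have [_ h1 _ _] := clP v w y vw'.
  have [_ _ h2 _] := c01P (v - y); have [_ _ h3 _] := c01P (y - w).
  have /andP[? ?] := hy.
  rewrite /Psi h1 // h2 ?h3 ?A0 ?B0; [exact: zs2|lra|lra].
have hPhi : forall y, v - 1 <= y <= w + 1 -> P (Phi y).
  move=> y _; rewrite /Phi.
  have [_ h1 h4 h5] := clP v w y vw'.
  case: (lerP y v) => yv.
    have [hc _ _ _] := c01P (v - y); have [_ _ h3 _] := c01P (y - w).
    rewrite /Psi h4 // h3 ?B0; last lra.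
    by rewrite zs1; apply: hA.
  case: (lerP y w) => yw.
    rewrite PsiE ?h1; last (apply/andP; split; lra).
    apply: hE; apply/andP; split; lra.
    apply/andP; split; lra.
  have [hc _ _ _] := c01P (y - w); have [_ _ h3 _] := c01P (v - y).
  rewrite /Psi h5 ?(ltW yw) // h3 ?A0; last lra.
  by rewrite zs3; apply: hB.
have [e e0 he] := @tube R n P Phi (v - 1) (w + 1) cPhi oP hPhi.
pose eta := Order.min (e / 2) ((w - v) / 2).
have eta0 : 0 < eta.
  rewrite /eta lt_min; apply/andP; split; apply: divr_gt0 => //; lra.
have eta1 : eta <= e / 2 by rewrite /eta ge_min lexx.
have eta2 : eta <= (w - v) / 2 by rewrite /eta ge_min lexx orbT.
have eta3 : 2 * eta <= w - v by move: eta2; rewrite ler_pdivlMr //; lra.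
have eta4 : eta < e.
  apply: (le_lt_trans eta1); rewrite ltr_pdivrMr //; lra.
exists (fun l x => Psi (x + cl 0 1 l * psi v w eta x)); split.
- apply: (c_comp _ Psi); last exact: cPsi.
  apply: c_add; first exact: c_snd.
  apply: c_mul.
    by apply: (c_comp _ (cl 0 1)); [exact: c_fst|exact: c_cl].
  by apply: (c_comp _ (psi v w eta)); [exact: c_snd|exact: c_psi].
- move=> l x hx.
  have [hl _ _ _] := c01P l.
  have [hy hcl] := kappa_bounds _ _ _ _ _ vw eta0 eta3 hx hl.
  set y := x + _ * _ in hy hcl *.
  have := he y (x - cl v w y) hy.
  have -> : cl v w y + (x - cl v w y) = x by rewrite addrC subrK.
  rewrite /Phi /=; apply.
  rewrite ltr_norml; apply/andP; split; move: hcl => /andP[? ?]; lra.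
- move=> x hx; have [_ _ h0 _] := c01P 0.
  by rewrite h0 // mul0r addr0 PsiE.
- have [_ _ _ h1] := c01P 1.
  rewrite h1 // mul1r (psi_v _ _ _ eta0 eta3) /Psi.
  have [_ _ h4 _] := clP v w (v + -1) vw'.
  have [_ _ h3 _] := c01P (v + -1 - w).
  have e1 : v - (v + -1) = 1 by lra.
  rewrite e1 h1 // h4 ?h3 ?B0; [exact: zs1|lra|lra].
- have [_ _ _ h1] := c01P 1.
  rewrite h1 // mul1r (psi_w _ _ _ eta0 eta3) /Psi.
  have [_ _ _ h5] := clP v w (w + 1) vw'.
  have [_ _ h3 _] := c01P (v - (w + 1)).
  have e1 : w + 1 - w = 1 by lra.
  rewrite e1 h1 // h5 ?h3 ?A0; [exact: zs3|lra|lra].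
Qed.
End Edge.

Section More.
Context {R : realType} (n : nat) (P : set ('rV[R]_n * R)).

Lemma ev_cont (A : set R) (p : set_type A) :
  continuous (fun f : maps_sp A P => f p).
Proof.
move=> f U; rewrite nbhsE; case=> O [oO Ofp] OU.
have oK : open ([set g | [set g x | x in [set p]] `<=` O] : set (maps_sp A P)).
  by apply: compact_open_open => //; exact: compact_set1.
have : nbhs f [set g : maps_sp A P | [set g x | x in [set p]] `<=` O].
  by apply: open_nbhs_nbhs; split => // _ [x -> <-].
by apply: filterS => g /= gO; apply: OU; apply: gO; exists p.
Qed.

Lemma cl01_in (u : R) : `[0, 1]%classic (cl 0 1 u).
Proof. by have [/= h _ _ _] := @clP R 0 1 u ler01; rewrite in_itv. Qed.

Lemma eval_path (A : set R) (gam : R -> maps_sp A P) (p : set_type A) :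
  {within `[0, 1]%classic, continuous gam} ->
  continuous (fun u => gam (cl 0 1 u) p).
Proof.
move=> /(subspace_sigL_continuousP _ _) cg.
have := c_comp _ _ (c_into _ _ cl01_in (c_cl 0 1)) (c_comp _ _ cg (@ev_cont A p)).
by [].
Qed.

Lemma cont_near (S G : R -> 'rV[R]_n) (a b x : R) :
  a < x < b -> (forall y, a < y < b -> S y = G y) -> continuous G ->
  {for x, continuous S}.
Proof.
move=> hx hSG cG.
have e : S x = G x by exact: hSG.
have cGx : G y @[y --> x] --> S x by rewrite e; exact: (cG x).
apply: cvg_trans cGx.
apply: near_eq_cvg.
have : x \in `]a, b[ by rewrite in_itv.
move=> /near_in_itvoo; apply: filterS => y; rewrite in_itv /= => hy.
by rewrite hSG.
Qed.

Lemma seq_max (s : seq R) x0 : x0 \in s ->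
  exists2 m, m \in s & forall y, y \in s -> y <= m.
Proof.
elim: s x0 => [//|a s IH] x0 _.
case: s IH => [|b s] IH.
  exists a; first exact: mem_head.
  by move=> y; rewrite mem_seq1 => /eqP ->.
have [m ms hm] := IH b (mem_head _ _).
case: (lerP a m) => am.
  exists m; first by rewrite in_cons ms orbT.
  by move=> y; rewrite in_cons => /orP[/eqP ->|/hm].
exists a; first exact: mem_head.
move=> y; rewrite in_cons => /orP[/eqP ->|/hm ym] //.
exact: le_trans ym (ltW am).
Qed.

Lemma finite_max (A : set R) x0 : finite_set A -> A x0 ->
  exists2 m, A m & forall y, A y -> y <= m.
Proof.
move=> /finite_fsetP [X ->] /= hx0.
have [m hm hy] := seq_max _ _ hx0.
by exists m.
Qed.

Lemma finite_min (A : set R) x0 : finite_set A -> A x0 ->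
  exists2 m, A m & forall y, A y -> m <= y.
Proof.
move=> fA Ax0.
have fA' : finite_set [set - y | y in A] by exact: finite_image.
have [m [y Ay <-] hm] := finite_max _ (- x0) fA' (ex_intro2 _ _ x0 Ax0 erefl).
exists y => // z Az; rewrite -lerN2; apply: hm; by exists z.
Qed.
End More.


Lemma svP {T : Type} (A : set T) (x : set_type A) : A (set_val x).
Proof. exact: set_valP. Qed.

Section ED.
Context {R : realType} (n : nat) (P : set ('rV[R]_n * R)).

Definition pt (v : R) : set_type [set v] := exist _ v (mem_set (erefl v)).
Definition pv (sigma : forall c : set R, maps_sp c P) (v : R) :=
  (set_val (sigma [set v] (pt v))).1.

Lemma sigE (A : set R) (x y : set_type A) : set_val x = set_val y -> x = y.
Proof. by move=> h; apply: eq_sig_hprop => // z p q; exact: bool_irrelevance. Qed.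

Lemma edge_data (V : set R) (sigma : forall c : set R, maps_sp c P)
  (hsec : forall c, closed_cell V c -> Gamma P c (sigma c))
  (hcomp : forall c c' (h : c' `<=` c), closed_cell V c -> closed_cell V c' ->
     same_path_component (R := R) (Gamma P c') (restr h (sigma c)) (sigma c'))
  (oP : open P) (v w : R) :
  V v -> V w -> v < w -> (forall x, V x -> ~ (v < x < w)) ->
  exists H : R -> R -> 'rV[R]_n, [/\ continuous (fun z : R * R => H z.1 z.2),
    (forall l x, v <= x <= w -> P (H l x, x)),
    (forall z : set_type `[v, w]%classic,
       set_val (sigma `[v, w]%classic z) = (H 0 (set_val z), set_val z)),
    H 1 v = pv sigma v & H 1 w = pv sigma w].
Proof.
move=> Vv Vw vw hcons.
have vw' : v <= w by exact: ltW.
set c := `[v, w]%classic.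
have cc : closed_cell V c by right; exists v, w; split.
have [csc ssc] := hsec c cc.
have clin : forall y, c (cl v w y).
  by move=> y; have [h _ _ _] := clP v w y vw'; rewrite /c /= in_itv /=.
pose E y := (set_val (sigma c (exist _ (cl v w y) (mem_set (clin y))))).1.
have cE : continuous E.
  apply: (c_comp _ fst); last exact: c_fst.
  apply: (c_comp _ set_val); last exact: c_val.
  apply: (c_comp _ (sigma c)); last exact: csc.
  exact: c_into _ _ clin (c_cl v w).
have ezE : forall z : set_type c, E (set_val z) = (set_val (sigma c z)).1.
  move=> z; rewrite /E; congr (set_val (sigma c _)).1; apply: sigE; rewrite !set_valE /=.
  have hz := svP _ z; move: hz; rewrite /c /= in_itv /= => hz.
  by have [_ h _ _] := clP v w (set_val z) vw'; rewrite h.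
have hE : forall x, v <= x <= w -> P (E x, x).
  move=> x hx.
  have := svP _ (sigma c (exist _ (cl v w x) (mem_set (clin x)))).
  have [_ h _ _] := clP v w x vw'.
  have hx' : set_val (exist _ (cl v w x) (mem_set (clin x)) : set_type c) = x.
    by rewrite set_valE /= h.
  by rewrite [set_val (sigma c _)]surjective_pairing ssc hx'.
have cl00 : cl 0 1 0 = 0 :> R by have [_ _ h _] := @clP R 0 1 0 ler01; rewrite h.
have cl11 : cl 0 1 1 = 1 :> R by have [_ _ _ h] := @clP R 0 1 1 ler01; rewrite h.
have subv : [set v] `<=` c by move=> x ->; rewrite /c /= in_itv /= lexx vw'.
have cv : closed_cell V [set v] by left; exists v.
have [gA [cgA gAin gA0 gA1]] := hcomp c [set v] subv cc cv.
pose A u := (set_val (gA (cl 0 1 u) (pt v))).1.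
have cA : continuous A.
  apply: (c_comp _ fst); last exact: c_fst.
  apply: (c_comp _ set_val); last exact: c_val.
  exact: eval_path (pt v) cgA.
have hA : forall u, 0 <= u <= 1 -> P (A u, v).
  move=> u _; have [_ sec] := gAin (cl 0 1 u) (cl01_in u).
  have := svP _ (gA (cl 0 1 u) (pt v)).
  by rewrite [set_val (gA _ _)]surjective_pairing sec.
have A0 : A 0 = E v.
  rewrite /A cl00 gA0 /restr -(ezE (Defs.incl subv (pt v))) /=.
  done.
have A1 : A 1 = pv sigma v by rewrite /A cl11 gA1.
have subw : [set w] `<=` c by move=> x ->; rewrite /c /= in_itv /= lexx vw'.
have cw : closed_cell V [set w] by left; exists w.
have [gB [cgB gBin gB0 gB1]] := hcomp c [set w] subw cc cw.
pose B u := (set_val (gB (cl 0 1 u) (pt w))).1.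
have cB : continuous B.
  apply: (c_comp _ fst); last exact: c_fst.
  apply: (c_comp _ set_val); last exact: c_val.
  exact: eval_path (pt w) cgB.
have hB : forall u, 0 <= u <= 1 -> P (B u, w).
  move=> u _; have [_ sec] := gBin (cl 0 1 u) (cl01_in u).
  have := svP _ (gB (cl 0 1 u) (pt w)).
  by rewrite [set_val (gB _ _)]surjective_pairing sec.
have B0 : B 0 = E w.
  rewrite /B cl00 gB0 /restr -(ezE (Defs.incl subw (pt w))) /=.
  done.
have B1 : B 1 = pv sigma w by rewrite /B cl11 gB1.
have [H [cH hH H0 H1v H1w]] :=
  edge_homotopy n P v w E A B oP vw cE cA cB hE hA hB A0 B0.
exists H; split => //; last by rewrite H1w.
- move=> z; have hz := svP _ z; move: hz; rewrite /c /= in_itv /= => hz.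
  by rewrite H0 // ezE [LHS]surjective_pairing ssc.
- by rewrite H1v.
Qed.
Lemma curry_path (A : set R) (H : R * set_type A -> set_type P) :
  continuous H -> continuous (fun u => (curry H u : maps_sp A P)).
Proof. move=> cH. exact: continuous_curry_fun. Qed.
End ED.

Section Vert.
Context {R : realType}.

Lemma max_ex (V : set R) (hfin : forall a b : R, finite_set (V `&` `[a, b]%classic))
  (Q : set R) x v0 : V v0 -> Q v0 -> (forall u, Q u -> u <= x) ->
  exists2 m, V m /\ Q m & forall u, V u -> Q u -> u <= m.
Proof.
move=> Vv0 Qv0 hQ.
pose A := V `&` Q `&` `[v0, x]%classic.
have fA : finite_set A.
  apply: (sub_finite_set _ (hfin v0 x)) => y [[Vy _] hy]; by split.
have Av0 : A v0 by split; [split|rewrite /= in_itv /= lexx hQ].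
have [m [[Vm Qm] hm] mmax] := finite_max _ _ fA Av0.
exists m => // u Vu Qu.
have : v0 <= m by move: hm; rewrite /= in_itv /= => /andP[].
case: (lerP u v0) => uv0 v0m; first exact: le_trans uv0 v0m.
by apply: mmax; split => //; rewrite /= in_itv /= (ltW uv0) hQ.
Qed.

Lemma min_ex (V : set R) (hfin : forall a b : R, finite_set (V `&` `[a, b]%classic))
  (Q : set R) x v0 : V v0 -> Q v0 -> (forall u, Q u -> x <= u) ->
  exists2 m, V m /\ Q m & forall u, V u -> Q u -> m <= u.
Proof.
move=> Vv0 Qv0 hQ.
pose A := V `&` Q `&` `[x, v0]%classic.
have fA : finite_set A.
  apply: (sub_finite_set _ (hfin x v0)) => y [[Vy _] hy]; by split.
have Av0 : A v0 by split; [split|rewrite /= in_itv /= lexx hQ].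
have [m [[Vm Qm] hm] mmin] := finite_min _ _ fA Av0.
exists m => // u Vu Qu.
have : m <= v0 by move: hm; rewrite /= in_itv /= => /andP[].
case: (lerP v0 u) => uv0 v0m; first exact: le_trans v0m uv0.
by apply: mmin; split => //; rewrite /= in_itv /= (ltW uv0) hQ.
Qed.
End Vert.


Lemma sigE' {T : Type} (A : set T) (x y : set_type A) : set_val x = set_val y -> x = y.
Proof. by move=> h; apply: eq_sig_hprop => // z p q; exact: bool_irrelevance. Qed.

Lemma sv_exist {T : Type} (A : set T) a (p : a \in A) :
  set_val (exist _ a p : set_type A) = a.
Proof. by []. Qed.

Theorem lemmaA1 (R : realType) (n : nat) (V : set R)
  (P : set ('rV[R]_n * R))
  (hV : CW_structure_R V) (hP : open P)
  (sigma : forall c : set R, maps_sp c P)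
  (hsec : forall c, closed_cell V c -> Gamma P c (sigma c))
  (hcomp : forall c c' (h : c' `<=` c), closed_cell V c -> closed_cell V c' ->
     same_path_component (R := R) (Gamma P c') (restr h (sigma c)) (sigma c')) :
  exists2 s : maps_sp setT P, Gamma P setT s &
    forall c (h : c `<=` setT), closed_cell V c ->
      same_path_component (R := R) (Gamma P c) (restr h s) (sigma c).
Proof.
have [hfin hup hdn] := hV.
have prevE : forall x, exists v, (V v /\ v <= x) /\ (forall u, V u -> u <= x -> u <= v).
  move=> x; have [v0 Vv0 v0x] := hdn x.
  have [m [Vm mx] hm] := max_ex V hfin (fun u => u <= x) x v0 Vv0 (ltW v0x) (fun u h => h).
  by exists m.
have prevsE : forall x, exists v, (V v /\ v < x) /\ (forall u, V u -> u < x -> u <= v).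
  move=> x; have [v0 Vv0 v0x] := hdn x.
  have [m [Vm mx] hm] := max_ex V hfin (fun u => u < x) x v0 Vv0 v0x (fun u h => ltW h).
  by exists m.
have nextE : forall x, exists v, (V v /\ x <= v) /\ (forall u, V u -> x <= u -> v <= u).
  move=> x; have [v0 Vv0 v0x] := hup x.
  have [m [Vm mx] hm] := min_ex V hfin (fun u => x <= u) x v0 Vv0 (ltW v0x) (fun u h => h).
  by exists m.
have nextsE : forall x, exists v, (V v /\ x < v) /\ (forall u, V u -> x < u -> v <= u).
  move=> x; have [v0 Vv0 v0x] := hup x.
  have [m [Vm mx] hm] := min_ex V hfin (fun u => x < u) x v0 Vv0 v0x (fun u h => ltW h).
  by exists m.
have [prev hprev] := choice prevE.
have [prevs hprevs] := choice prevsE.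
have [next hnext] := choice nextE.
have [nexts hnexts] := choice nextsE.
have edE : forall ab : R * R, exists H : R -> R -> 'rV[R]_n,
    V ab.1 -> V ab.2 -> ab.1 < ab.2 -> (forall x, V x -> ~ (ab.1 < x < ab.2)) ->
    [/\ continuous (fun z : R * R => H z.1 z.2),
    (forall l x, ab.1 <= x <= ab.2 -> P (H l x, x)),
    (forall z : set_type `[ab.1, ab.2]%classic,
       set_val (sigma `[ab.1, ab.2]%classic z) = (H 0 (set_val z), set_val z)),
    H 1 ab.1 = pv n P sigma ab.1 & H 1 ab.2 = pv n P sigma ab.2].
  move=> [a b] /=.
  case: (pselect (V a /\ V b /\ a < b /\ (forall x, V x -> ~ (a < x < b)))).
    move=> [Va [Vb [ab hc]]].
    have [H hH] := @edge_data R n P V sigma hsec hcomp hP a b Va Vb ab hc.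
    by exists H.
  move=> nh; exists (fun _ _ => 0) => Va Vb ab hc; exfalso; exact: nh.
have [Hs hHs] := choice edE.
pose F a b := Hs (a, b) 1.
have cF : forall a b, continuous (fun z : R * R => Hs (a, b) z.1 z.2) -> continuous (F a b).
  move=> a b cH.
  apply: (c_comp (fun y : R => ((1:R), y)) (fun z : R * R => Hs (a, b) z.1 z.2)); last exact: cH.
  by apply: c_pair; [exact: c_cst|exact: c_id].
have inedge : forall a b y, V a -> V b -> a < b -> (forall x, V x -> ~ (a < x < b)) ->
    a < y < b -> [/\ ~ V y, prev y = a & next y = b].
  move=> a b y Va Vb ab hc hy.
  have nVy : ~ V y by move=> Vy; exact: hc y Vy hy.
  have /andP[ay yb] := hy.
  have [[Vp py] hp] := hprev y.
  have [[Vn yn] hn] := hnext y.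
  have ap : a <= prev y := hp a Va (ltW ay).
  have bn : next y <= b := hn b Vb (ltW yb).
  split => //; apply/eqP; rewrite eq_le; apply/andP; split => //.
    case: (lerP (prev y) a) => // ap'; exfalso; apply: (hc (prev y) Vp).
    by apply/andP; split => //; exact: le_lt_trans py yb.
  case: (lerP b (next y)) => // bn'; exfalso; apply: (hc (next y) Vn).
  by apply/andP; split => //; exact: lt_le_trans ay yn.
pose S x := if pselect (V x) then pv n P sigma x else F (prev x) (next x) x.
have SV : forall x, V x -> S x = pv n P sigma x.
  move=> x Vx; rewrite /S; destruct (pselect (V x)) as [Vx'|nV]; first by [].
  by exfalso; apply: nV.
have Sedge : forall a b y, V a -> V b -> a < b -> (forall x, V x -> ~ (a < x < b)) ->
    a <= y <= b -> S y = F a b y.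
  move=> a b y Va Vb ab hc /andP[ay yb].
  have [_ _ _ H1a H1b] := hHs (a, b) Va Vb ab hc.
  case: (eqVneq y a) => [->|ya].
    by rewrite /S; case: (pselect (V a)) => // _; rewrite /F H1a.
  case: (eqVneq y b) => [->|yb'].
    by rewrite /S; case: (pselect (V b)) => // _; rewrite /F H1b.
  have ay' : a < y by rewrite lt_neqAle eq_sym ya ay.
  have yb2 : y < b by rewrite lt_neqAle yb' yb.
  have [nVy py ny] := inedge a b y Va Vb ab hc (introT andP (conj ay' yb2)).
  rewrite /S; destruct (pselect (V y)) as [Vy|nVy']; first by exfalso; apply: nVy.
  by rewrite /= py ny.
have consN : forall x, ~ V x -> [/\ V (prev x), V (next x), prev x < x, x < next x &
    forall u, V u -> ~ (prev x < u < next x)].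
  move=> x nVx; have [[Vp px] hp] := hprev x; have [[Vn xn] hn] := hnext x.
  have px' : prev x < x.
    rewrite lt_neqAle px andbT; apply/negP => /eqP e; apply: nVx; rewrite -e //.
  have xn' : x < next x.
    rewrite lt_neqAle xn andbT; apply/negP => /eqP e; apply: nVx; rewrite e //.
  split => // u Vu /andP[pu un].
  case: (lerP u x) => ux.
    by have := hp u Vu ux; lra.
  by have := hn u Vu (ltW ux); lra.
have hSP : forall x, P (S x, x).
  move=> x; rewrite /S; case: (pselect (V x)) => [Vx|nVx].
    have [_ sec] := hsec [set x] (or_introl (ex_intro2 _ _ x Vx erefl)).
    have := svP _ (sigma [set x] (pt x)).
    by rewrite [set_val (sigma _ _)]surjective_pairing sec.
  have [Vp Vn px xn hc] := consN x nVx.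
  have [_ hH _ _ _] := hHs (prev x, next x) Vp Vn (lt_trans px xn) hc.
  apply: hH => /=; apply/andP; split; exact: ltW.
have cS : continuous S.
  move=> x; case: (pselect (V x)) => [Vx|nVx].
    have [[Vp px] hp] := hprevs x; have [[Vn xn] hn] := hnexts x.
    have hcp : forall u, V u -> ~ (prevs x < u < x).
      by move=> u Vu /andP[h1 h2]; have := hp u Vu h2; lra.
    have hcn : forall u, V u -> ~ (x < u < nexts x).
      by move=> u Vu /andP[h1 h2]; have := hn u Vu h1; lra.
    have [cHp _ _ H1ap H1bp] := hHs (prevs x, x) Vp Vx px hcp.
    have [cHn _ _ H1an H1bn] := hHs (x, nexts x) Vx Vn xn hcn.
    apply: (@cont_near R n S (fun y => F (prevs x) x (Order.min y x) +
       F x (nexts x) (Order.max y x) - pv n P sigma x) (prevs x) (nexts x) x).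
    - by apply/andP; split.
    - move=> y /andP[py yn] /=.
      case: (lerP y x) => yx.
        rewrite (Sedge (prevs x) x y) //; last by apply/andP; split => //; exact: ltW.
        by rewrite ?(min_l yx) ?(max_r yx) /F H1an addrK.
      rewrite (Sedge x (nexts x) y) //; last by apply/andP; split => //; exact: ltW.
      rewrite ?(min_r (ltW yx)) ?(max_l (ltW yx)) /F H1bp.
      by rewrite addrC addKr.
    - apply: c_sub; last exact: c_cst.
      apply: c_add.
        apply: (c_comp _ (F (prevs x) x)); last exact: cF.
        by apply: c_min; [exact: c_id|exact: c_cst].
      apply: (c_comp _ (F x (nexts x))); last exact: cF.
      by apply: c_max; [exact: c_id|exact: c_cst].
  have [Vp Vn px xn hc] := consN x nVx.
  have [cH _ _ _ _] := hHs (prev x, next x) Vp Vn (lt_trans px xn) hc.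
  apply: (@cont_near R n S (F (prev x) (next x)) (prev x) (next x) x).
  - by apply/andP; split.
  - move=> y /andP[py yn].
    by apply: (Sedge _ _ _ Vp Vn (lt_trans px xn) hc); apply/andP; split; exact: ltW.
  - exact: cF.
pose s : maps_sp setT P := fun z => exist _ (S (set_val z), set_val z) (mem_set (hSP (set_val z))).
exists s.
  split => //.
  exact: (c_into _ (fun z : set_type [set: R] => (S (set_val z), set_val z))
            (fun z => hSP (set_val z)) (c_pair _ _ (c_comp _ _ (c_val _) cS) (c_val _))).
move=> c h hc; case: hc => [[v Vv ec]|[v [w [Vv Vw vw hcons ec]]]]; subst c.
  have cv : closed_cell V [set v] by left; exists v.
  exists (fun _ : R => sigma [set v]); split.
  - apply: continuous_subspaceT; exact: c_cst.
  - by move=> u _; apply: hsec.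
  - apply: boolp.funext => z; apply: sigE'.
    have ez : z = pt v by apply: sigE; exact: (svP _ z).
    have [_ sec] := hsec [set v] cv.
    rewrite ez /restr /s sv_exist /= SV //.
    by rewrite [LHS]surjective_pairing sec.
  - by [].
have [cH hH H0 H1v H1w] := hHs (v, w) Vv Vw vw hcons.
have hK : forall uz : R * set_type `[v, w]%classic,
    P (Hs (v, w) (1 - uz.1) (set_val uz.2), set_val uz.2).
  move=> [u z]; apply: hH => /=.
  by have := svP _ z; rewrite /= in_itv /=.
pose K := fun uz : R * set_type `[v, w]%classic =>
  (exist _ (Hs (v, w) (1 - uz.1) (set_val uz.2), set_val uz.2) (mem_set (hK uz))
     : set_type P).
have cK : continuous K.
  apply: (c_into _ (fun uz : R * set_type `[v, w]%classic =>
     (Hs (v, w) (1 - uz.1) (set_val uz.2), set_val uz.2)) hK).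
  apply: c_pair; last exact: (c_comp _ _ c_snd (c_val _)).
  apply: (c_comp (fun uz : R * set_type `[v, w]%classic => (1 - uz.1, set_val uz.2))
     (fun z : R * R => Hs (v, w) z.1 z.2)); last exact: cH.
  apply: c_pair; first by apply: c_sub; [exact: c_cst|exact: c_fst].
  exact: (c_comp _ _ c_snd (c_val _)).
exists (fun u => (curry K u : maps_sp `[v, w]%classic P)); split.
- by apply: continuous_subspaceT; exact: (@curry_path R n P _ K cK).
- move=> u _; split => //.
  exact: (c_comp _ _ (c_pair _ _ (c_cst u) c_id) cK).
- apply: boolp.funext => z; apply: sigE'.
  have hz : v <= set_val z <= w by have := svP _ z; rewrite /= in_itv /=.
  rewrite /curry /K /restr /s !sv_exist /= subr0.
  by rewrite (Sedge v w (set_val z) Vv Vw vw hcons hz).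
- apply: boolp.funext => z; apply: sigE'.
  by rewrite /curry /K sv_exist /= subrr H0.
Qed.
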